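(* Let $h>0$, $\beta>0$, $f(x)=hx$, $g(r)=\frac12\log(1-r^2)+\frac{\beta^2}{2}(1-r^2)^2$, $q_P=\max\big(1-\frac{1}{\sqrt2\beta},0\big)$, $\mathrm{Plef}(\beta)=[\sqrt{q_P},1]$, and $\tilde{\mathcal{B}}(\alpha,r)=f(r\alpha)+\sqrt2\beta r^2\sqrt{1-\alpha^2}+g(r)$. Then $$\sup_{r\in\mathrm{Plef}(\beta),\,\alpha\in[-1,1]}\tilde{\mathcal{B}}(\alpha,r)=\sup_{q\in[q_P,1)}\mathscr{B}(q),\qquad \mathscr{B}(q)=\sqrt{h^2q+2\beta^2q^2}+\frac12\log(1-q)+\frac{\beta^2}{2}(1-q)^2,$$ where $\mathscr{B}$ is concave on $[q_P,1)$ with a unique maximizer $\hat q$, which is the unique solution in $(q_P,1)$ of $$\frac{q}{h^2+2q\beta^2}=(1-q)^2.$$ Moreover the unique maximizer of the left-hand side is $\hat r=\sqrt{\hat q}$, $\hat\alpha=\frac{h}{\sqrt{h^2+2\beta^2\hat q}}$.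
   Context: At $r=1$, $g(1)=-\infty$ and hence $\tilde{\mathcal{B}}(\alpha,1)=-\infty$. *)

(* Defs.v *)
From HB Require Import structures.
From mathcomp Require Import all_boot all_order all_algebra.
From mathcomp Require Import all_classical all_reals all_analysis.
Set Implicit Arguments. Unset Strict Implicit. Unset Printing Implicit Defensive.
Import Order.TTheory GRing.Theory Num.Theory.
Local Open Scope classical_set_scope.
Local Open Scope ring_scope.

Section Defs.
Variable R : realType.

Definition f_lin (h x : R) : R := h * x.

Definition g_fun (beta r : R) : \bar R :=
  if r ^+ 2 < 1 then (ln (1 - r ^+ 2) / 2 + beta ^+ 2 / 2 * (1 - r ^+ 2) ^+ 2)%:E
  else -oo%E.

Definition qP (beta : R) : R := Num.max (1 - 1 / (Num.sqrt 2 * beta)) 0.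

Definition Plef (beta : R) : set R := `[Num.sqrt (qP beta), 1].

Definition Btilde (h beta alpha r : R) : \bar R :=
  ((f_lin h (r * alpha) + Num.sqrt 2 * beta * r ^+ 2 * Num.sqrt (1 - alpha ^+ 2))%:E
   + g_fun beta r)%E.

Definition Bscr (h beta q : R) : R :=
  Num.sqrt (h ^+ 2 * q + 2 * beta ^+ 2 * q ^+ 2) + ln (1 - q) / 2
  + beta ^+ 2 / 2 * (1 - q) ^+ 2.

End Defs.

(* Main.v *)
Require Import Defs.
From HB Require Import structures.
From mathcomp Require Import all_boot all_order all_algebra.
From mathcomp Require Import all_classical all_reals all_analysis.
From mathcomp Require Import ring lra.
Import Order.TTheory GRing.Theory Num.Theory.
Import numFieldNormedType.Exports.
Local Open Scope classical_set_scope.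
Local Open Scope ring_scope.
Set Implicit Arguments. Unset Strict Implicit.

Definition psiM (R : realType) (c m : R) (y : R) : R :=
  ln m / 2 + c / 2 * m ^+ 2 + (1 / (2 * m) + c * m) * (y - m) - (ln y / 2 + c / 2 * y ^+ 2).


Lemma psiM_derive (R : realType) (c m x : R) (m0 : 0 < m) (x0 : 0 < x) :
  is_derive x 1 (psiM c m) ((1 / (2 * m) + c * m) - (x^-1 / 2 + c * x)).
Proof.
have H := is_derive1_ln x0.
rewrite /psiM; apply: is_derive_eq.
rewrite /GRing.scale /=; field; by rewrite !gt_eqF.
Qed.

Lemma psiM_d1 (R : realType) (c m x : R) (m0 : 0 < m) (x0 : 0 < x) :
  derivable (psiM c m) x 1 /\
  derive1 (psiM c m) x = (m - x) * (2 * c * m * x - 1) / (2 * m * x).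
Proof.
have H := @psiM_derive R c m x m0 x0.
case: H => H1 H2; split; first exact: H1.
rewrite derive1E H2.
by field; rewrite !gt_eqF.
Qed.

Lemma psiM_m (R : realType) (c m : R) : psiM c m m = 0.
Proof. rewrite /psiM subrr mulr0 addr0; lra. Qed.

Lemma Mtan (R : realType) (c K a m : R) : 0 <= c -> 2 * c * K ^+ 2 <= 1 ->
  0 < a -> a <= K -> 0 < m -> m <= K ->
  ln a / 2 + c / 2 * a ^+ 2 <= ln m / 2 + c / 2 * m ^+ 2 + (1 / (2 * m) + c * m) * (a - m).
Proof.
move=> c0 cK a0 aK m0 mK.
suff : 0 <= psiM c m a by rewrite /psiM subr_ge0.
rewrite -(psiM_m c m).
have cmx : forall x, 0 < x -> x <= K -> 2 * c * m * x <= 1.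
  move=> x x0 xK; apply: le_trans cK.
  have : m * x <= K ^+ 2 by rewrite expr2; apply: ler_pM => //; apply: ltW.
  by move=> H; rewrite -mulrA; apply: ler_wpM2l => //; rewrite mulr_ge0.
have [am|ma] := leP a m.
- have D1 : forall x, x \in `]a, m[ -> derivable (psiM c m) x 1.
    move=> x; rewrite in_itv /= => /andP[ax xm].
    by case: (@psiM_d1 R c m x m0 (lt_trans a0 ax)).
  have D2 : forall x, x \in `]a, m[ -> derive1 (psiM c m) x <= 0.
    move=> x; rewrite in_itv /= => /andP[ax xm].
    have x0 := lt_trans a0 ax.
    case: (@psiM_d1 R c m x m0 x0) => _ ->.
    rewrite ler_pdivrMr ?mulr_gt0 // mul0r.
    apply: mulr_ge0_le0; first by rewrite subr_ge0 ltW.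
    by rewrite subr_le0 cmx // ltW // (lt_le_trans xm).
  have C : {within `[a, m]%classic, continuous (psiM c m)}.
    apply: derivable_within_continuous => x; rewrite in_itv /= => /andP[ax xm].
    by case: (@psiM_d1 R c m x m0 (lt_le_trans a0 ax)).
  have H := @ler0_derive1_le_cc R (psiM c m) a m D1 D2 C.
  apply: H => //.
  + by rewrite in_itv /= lexx am.
  + by rewrite in_itv /= lexx am.
- have D1 : forall x, x \in `]m, a[ -> derivable (psiM c m) x 1.
    move=> x; rewrite in_itv /= => /andP[ax xm].
    by case: (@psiM_d1 R c m x m0 (lt_trans m0 ax)).
  have D2 : forall x, x \in `]m, a[ -> 0 <= derive1 (psiM c m) x.
    move=> x; rewrite in_itv /= => /andP[mx xa].
    have x0 := lt_trans m0 mx.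
    case: (@psiM_d1 R c m x m0 x0) => _ ->.
    apply: divr_ge0; last by rewrite ltW // !mulr_gt0.
    apply: mulr_le0.
      by rewrite subr_le0 ltW.
    by rewrite subr_le0 cmx // ltW // (lt_le_trans xa).
  have C : {within `[m, a]%classic, continuous (psiM c m)}.
    apply: derivable_within_continuous => x; rewrite in_itv /= => /andP[ax xm].
    by case: (@psiM_d1 R c m x m0 (lt_le_trans m0 ax)).
  have H := @ger0_derive1_le_cc R (psiM c m) m a D1 D2 C.
  apply: H => //.
  + by rewrite in_itv /= lexx ltW.
  + by rewrite in_itv /= lexx ltW.
  + exact: ltW.
Qed.

Lemma Stan (R : realType) (h b p q : R) : 0 < h -> 0 < p -> 0 <= q -> q != p ->
  Num.sqrt (h ^+ 2 * q + 2 * b ^+ 2 * q ^+ 2) <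
  Num.sqrt (h ^+ 2 * p + 2 * b ^+ 2 * p ^+ 2) +
  (h ^+ 2 + 4 * b ^+ 2 * p) / (2 * Num.sqrt (h ^+ 2 * p + 2 * b ^+ 2 * p ^+ 2)) * (q - p).
Proof.
move=> h0 p0 q0 qp.
set A := Num.sqrt (h ^+ 2 * p + _); set S := Num.sqrt (h ^+ 2 * q + _).
have phip : 0 < h ^+ 2 * p + 2 * b ^+ 2 * p ^+ 2.
  have := mulr_gt0 (exprn_gt0 2 h0) p0; have := sqr_ge0 (b * p); move=> *; nra.
have phiq : 0 <= h ^+ 2 * q + 2 * b ^+ 2 * q ^+ 2.
  have := mulr_ge0 (ltW (exprn_gt0 2 h0)) q0; have := sqr_ge0 (b * q); move=> *; nra.
have A0 : 0 < A by rewrite /A sqrtr_gt0.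
have S0 : 0 <= S by rewrite /S sqrtr_ge0.
have hA2 : A ^+ 2 = h ^+ 2 * p + 2 * b ^+ 2 * p ^+ 2 by rewrite sqr_sqrtr // ltW.
have hS2 : S ^+ 2 = h ^+ 2 * q + 2 * b ^+ 2 * q ^+ 2 by rewrite sqr_sqrtr.
set E := h ^+ 2 * (p + q) + 4 * b ^+ 2 * p * q.
have E0 : 0 < E.
  have := mulr_gt0 (exprn_gt0 2 h0) p0; have := mulr_ge0 (ltW (exprn_gt0 2 h0)) q0.
  have := mulr_ge0 (sqr_ge0 b) (mulr_ge0 (ltW p0) q0); rewrite /E; move=> *; nra.
have key : (2 * A * S) ^+ 2 < E ^+ 2.
  rewrite -subr_gt0.
  have -> : E ^+ 2 - (2 * A * S) ^+ 2 = h ^+ 4 * (p - q) ^+ 2.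
    rewrite !exprMn hA2 hS2 /E; ring.
  apply: mulr_gt0; first exact: exprn_gt0.
  by rewrite lt_def sqr_ge0 andbT sqrf_eq0 subr_eq0 eq_sym.
have XE : 2 * A * S < E.
  have X0 : 0 <= 2 * A * S by rewrite !mulr_ge0 // ltW.
  nra.
have -> : A + (h ^+ 2 + 4 * b ^+ 2 * p) / (2 * A) * (q - p) = E / (2 * A).
  have -> : E = 2 * A ^+ 2 + (h ^+ 2 + 4 * b ^+ 2 * p) * (q - p) by rewrite hA2 /E; ring.
  by field; rewrite gt_eqF.
by rewrite ltr_pdivlMr ?mulr_gt0 //; nra.
Qed.


Lemma sq_inj (R : realType) (x y : R) : 0 <= x -> 0 <= y -> x ^+ 2 = y ^+ 2 -> x = y.
Proof. by move=> hx hy H; rewrite -(ger0_norm hx) -(ger0_norm hy) -!sqrtr_sqr H. Qed.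

Lemma qP_facts (R : realType) (b : R) : 0 < b ->
  [/\ 0 <= qP b, qP b < 1, 2 * b ^+ 2 * (1 - qP b) ^+ 2 <= 1 &
      (qP b = 0 \/ 2 * b ^+ 2 * (1 - qP b) ^+ 2 = 1)].
Proof.
move=> b0; rewrite /qP.
set s := Num.sqrt 2.
have s0 : 0 < s by rewrite sqrtr_gt0.
have s2 : s ^+ 2 = 2 by rewrite sqr_sqrtr.
set t := 1 / (s * b).
have sb0 : 0 < s * b by rewrite mulr_gt0.
have t0 : 0 < t by rewrite divr_gt0.
have tsb : t * (s * b) = 1 by rewrite /t mul1r mulVf // gt_eqF.
have key : 2 * b ^+ 2 * t ^+ 2 = 1.
  by rewrite -s2; transitivity ((t * (s * b)) ^+ 2); [ring | rewrite tsb expr1n].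
case: (leP (1 - t) 0) => H.
- split => //; last by left.
  rewrite subr0 expr1n mulr1.
  have t1 : 0 <= t ^+ 2 - 1 by rewrite expr2; nra.
  have := mulr_ge0 (sqr_ge0 b) t1; nra.
- idtac.
  have -> : 1 - (1 - t) = t by ring.
  split; [exact: ltW| lra | by rewrite key | by right].
Qed.

Definition Sf (R : realType) (h b q : R) := Num.sqrt (h ^+ 2 * q + 2 * b ^+ 2 * q ^+ 2).
Definition Dfun (R : realType) (h b p : R) :=
  (h ^+ 2 + 4 * b ^+ 2 * p) / (2 * Sf h b p) - (1 / (2 * (1 - p)) + b ^+ 2 * (1 - p)).

Lemma Btan_lt (R : realType) (h b p q : R) : 0 < h -> 0 < b -> qP b <= p -> p < 1 -> 0 < p ->
  qP b <= q -> q < 1 -> q != p ->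
  Bscr h b q < Bscr h b p + Dfun h b p * (q - p).
Proof.
move=> h0 b0 Pp p1 p0 Pq q1 qp.
have [qP0 qP1 qPK _] := qP_facts b0.
have S := @Stan R h b p q h0 p0 (le_trans qP0 Pq) qp.
have M := @Mtan R (b ^+ 2) (1 - qP b) (1 - q) (1 - p) (sqr_ge0 b) qPK.
have {M} M : ln (1 - q) / 2 + b ^+ 2 / 2 * (1 - q) ^+ 2 <=
   ln (1 - p) / 2 + b ^+ 2 / 2 * (1 - p) ^+ 2 + (1 / (2 * (1 - p)) + b ^+ 2 * (1 - p)) * (1 - q - (1 - p)).
  by apply: M; lra.
rewrite /Bscr /Dfun /Sf; move: S M; rewrite -/(Sf h b p); lra.
Qed.

Lemma Btan_le (R : realType) (h b p q : R) : 0 < h -> 0 < b -> qP b <= p -> p < 1 -> 0 < p ->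
  qP b <= q -> q < 1 ->
  Bscr h b q <= Bscr h b p + Dfun h b p * (q - p).
Proof.
move=> h0 b0 Pp p1 p0 Pq q1.
have [->|qp] := eqVneq q p; first by rewrite subrr mulr0 addr0.
exact/ltW/Btan_lt.
Qed.

Lemma Dzero (R : realType) (h b p : R) : 0 < h -> 0 < p -> p < 1 ->
  p / (h ^+ 2 + 2 * p * b ^+ 2) = (1 - p) ^+ 2 -> Dfun h b p = 0.
Proof.
move=> h0 p0 p1 E.
set v := 1 - p; set d := h ^+ 2 + 2 * p * b ^+ 2.
have v0 : 0 < v by rewrite /v subr_gt0.
have d0 : 0 < d.
  rewrite /d; have := exprn_gt0 2 h0; have := mulr_ge0 (ltW p0) (sqr_ge0 b); move=> *; nra.
have hp : p = v ^+ 2 * d by rewrite -E mulfVK // gt_eqF.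
have hS : Sf h b p = v * d.
  rewrite /Sf; have -> : h ^+ 2 * p + 2 * b ^+ 2 * p ^+ 2 = (v * d) ^+ 2.
    have -> : h ^+ 2 * p + 2 * b ^+ 2 * p ^+ 2 = p * d by rewrite /d; ring.
    by rewrite {1}hp; ring.
  by rewrite sqrtr_sqr ger0_norm // mulr_ge0 // ltW.
rewrite /Dfun hS -/v.
have -> : h ^+ 2 + 4 * b ^+ 2 * p = d + 2 * b ^+ 2 * p by rewrite /d; ring.
have -> : (d + 2 * b ^+ 2 * p) / (2 * (v * d)) - (1 / (2 * v) + b ^+ 2 * v) =
          b ^+ 2 * (p - v ^+ 2 * d) / (v * d).
  by field; rewrite !gt_eqF.
by rewrite -hp subrr mulr0 mul0r.
Qed.

Lemma Bmax (R : realType) (h b p q : R) : 0 < h -> 0 < b -> qP b < p -> p < 1 ->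
  p / (h ^+ 2 + 2 * p * b ^+ 2) = (1 - p) ^+ 2 ->
  qP b <= q -> q < 1 -> q != p -> Bscr h b q < Bscr h b p.
Proof.
move=> h0 b0 Pp p1 E Pq q1 qp.
have [qP0 _ _ _] := qP_facts b0.
have p0 : 0 < p := le_lt_trans qP0 Pp.
have := @Btan_lt R h b p q h0 b0 (ltW Pp) p1 p0 Pq q1 qp.
by rewrite (Dzero h0 p0 p1 E) mul0r addr0.
Qed.

Lemma Bconc (R : realType) (h b x y t : R) : 0 < h -> 0 < b ->
  qP b <= x -> x < 1 -> qP b <= y -> y < 1 -> 0 <= t -> t <= 1 ->
  t * Bscr h b x + (1 - t) * Bscr h b y <= Bscr h b (t * x + (1 - t) * y).
Proof.
move=> h0 b0 Px x1 Py y1 t0 t1.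
have [qP0 _ _ _] := qP_facts b0.
have [->|tn0] := eqVneq t 0.
  by rewrite !mul0r !add0r subr0 !mul1r.
have [->|tn1] := eqVneq t 1.
  by rewrite subrr !mul0r !addr0 !mul1r.
have tp : 0 < t by rewrite lt_def tn0.
have tl : t < 1 by rewrite lt_neqAle tn1.
have Pm : qP b <= t * x + (1 - t) * y by nra.
have m1 : t * x + (1 - t) * y < 1 by nra.
have [m0|] := ltP 0 (t * x + (1 - t) * y).
  have Hx := @Btan_le R h b _ x h0 b0 Pm m1 m0 Px x1.
  have Hy := @Btan_le R h b _ y h0 b0 Pm m1 m0 Py y1.
  have e1 := ler_wpM2l t0 Hx.
  have t1p : 0 <= 1 - t by lra.
  have e2 := ler_wpM2l t1p Hy.
  by move: e1 e2; set D := Dfun _ _ _; set Bm := Bscr _ _ (t * x + _); nra.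
move=> m0.
have x0 : x = 0 by nra.
have y0 : y = 0 by nra.
by rewrite x0 y0 !mulr0 addr0; lra.
Qed.

Lemma root_ex (R : realType) (h b : R) : 0 < h -> 0 < b ->
  exists p, [/\ qP b < p, p < 1 & p / (h ^+ 2 + 2 * p * b ^+ 2) = (1 - p) ^+ 2].
Proof.
move=> h0 b0.
have [qP0 qP1 qPK qPc] := qP_facts b0.
pose Pf := fun q : R => (1 - q) ^+ 2 * (h ^+ 2 + 2 * q * b ^+ 2) - q.
have P1 : Pf 1 = -1 by rewrite /Pf subrr expr0n /= mul0r sub0r.
have PqP : 0 < Pf (qP b).
  have -> : Pf (qP b) = (1 - qP b) ^+ 2 * h ^+ 2 + qP b * (2 * b ^+ 2 * (1 - qP b) ^+ 2) - qP b.
    by rewrite /Pf; ring.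
  have hpos : 0 < (1 - qP b) ^+ 2 * h ^+ 2.
    by rewrite mulr_gt0 // exprn_gt0 // subr_gt0.
  case: qPc => [E|->]; last by lra.
  by rewrite E in hpos *; lra.
have C : {within `[qP b, 1]%classic, continuous Pf}.
  by apply: derivable_within_continuous => x _; rewrite /Pf.
have [c cI Pc] : exists2 c, c \in `[qP b, 1] & Pf c = 0.
  apply: IVT => //; first exact: ltW.
  rewrite ge_min le_max P1; apply/andP; split; apply/orP; [right|left]; lra.
move: cI; rewrite in_itv /= => /andP[c0 c1].
have cn1 : c != 1 by apply/eqP => E; move: Pc; rewrite E P1; lra.
have cnq : c != qP b by apply/eqP => E; move: Pc; rewrite E; lra.
have cq : qP b < c by rewrite lt_neqAle eq_sym cnq.
have cl : c < 1 by rewrite lt_neqAle cn1.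
exists c; split => //.
have d0 : 0 < h ^+ 2 + 2 * c * b ^+ 2.
  have := exprn_gt0 2 h0; have := mulr_ge0 (le_trans qP0 c0) (sqr_ge0 b); move=> *; nra.
have E' : c = (1 - c) ^+ 2 * (h ^+ 2 + 2 * c * b ^+ 2) by move: Pc; rewrite /Pf; lra.
by rewrite {1}E' mulfK // gt_eqF.
Qed.

Definition Xf (R : realType) (h b a r : R) :=
  f_lin h (r * a) + Num.sqrt 2 * b * r ^+ 2 * Num.sqrt (1 - a ^+ 2).

Lemma lagr (R : realType) (h b r a w s : R) : w ^+ 2 = 1 - a ^+ 2 -> s ^+ 2 = 2 ->
  (h ^+ 2 * r ^+ 2 + 2 * b ^+ 2 * (r ^+ 2) ^+ 2) - (h * (r * a) + s * b * r ^+ 2 * w) ^+ 2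
  = (h * r * w - s * b * r ^+ 2 * a) ^+ 2.
Proof.
move=> hw hs.
have -> : h ^+ 2 * r ^+ 2 + 2 * b ^+ 2 * (r ^+ 2) ^+ 2 =
  (h ^+ 2 * r ^+ 2 + s ^+ 2 * b ^+ 2 * (r ^+ 2) ^+ 2) * (w ^+ 2 + a ^+ 2).
  by rewrite hw hs; ring.
ring.
Qed.

Lemma ah_sq (R : realType) (h b r : R) : 0 < h ->
  (h / Num.sqrt (h ^+ 2 + 2 * b ^+ 2 * r ^+ 2)) ^+ 2 = h ^+ 2 / (h ^+ 2 + 2 * b ^+ 2 * r ^+ 2)
  /\ 0 < h / Num.sqrt (h ^+ 2 + 2 * b ^+ 2 * r ^+ 2)
  /\ h / Num.sqrt (h ^+ 2 + 2 * b ^+ 2 * r ^+ 2) <= 1.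
Proof.
move=> h0.
set d := h ^+ 2 + 2 * b ^+ 2 * r ^+ 2.
have dh : h ^+ 2 <= d by have := sqr_ge0 (b * r); rewrite /d; move=> *; nra.
have d0 : 0 < d := lt_le_trans (exprn_gt0 2 h0) dh.
have sd0 : 0 < Num.sqrt d by rewrite sqrtr_gt0.
have E : (h / Num.sqrt d) ^+ 2 = h ^+ 2 / d by rewrite expr_div_n sqr_sqrtr // ltW.
have pos : 0 < h / Num.sqrt d by rewrite divr_gt0.
split => //; split => //.
have : (h / Num.sqrt d) ^+ 2 <= 1 by rewrite E ler_pdivrMr // mul1r.
move=> H; nra.
Qed.

Lemma XleN (R : realType) (h b r a : R) : -1 <= a -> a <= 1 -> Xf h b a r <= Sf h b (r ^+ 2).
Proof.
move=> a1 a2.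
rewrite /Xf /Sf /f_lin.
set w := Num.sqrt (1 - a ^+ 2); set s := Num.sqrt 2.
have w2 : w ^+ 2 = 1 - a ^+ 2 by rewrite sqr_sqrtr // subr_ge0; nra.
have s2 : s ^+ 2 = 2 by rewrite sqr_sqrtr.
have N0 : 0 <= h ^+ 2 * r ^+ 2 + 2 * b ^+ 2 * (r ^+ 2) ^+ 2.
  by have := sqr_ge0 (h * r); have := sqr_ge0 (b * r ^+ 2); move=> *; nra.
have L := @lagr R h b r a w s w2 s2.
apply: (le_trans (ler_norm _)); rewrite -sqrtr_sqr ler_sqrt //.
by rewrite -subr_ge0 L sqr_ge0.
Qed.

Lemma XltN (R : realType) (h b r a : R) : 0 < h -> 0 < b -> 0 < r -> -1 <= a -> a <= 1 ->
  a != h / Num.sqrt (h ^+ 2 + 2 * b ^+ 2 * r ^+ 2) -> Xf h b a r < Sf h b (r ^+ 2).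
Proof.
move=> h0 b0 r0 a1 a2 aneq.
rewrite lt_neqAle XleN // andbT.
apply: contra aneq => /eqP E.
move: E; rewrite /Xf /Sf /f_lin => E.
set w := Num.sqrt (1 - a ^+ 2) in E *; set s := Num.sqrt 2 in E *.
have w2 : w ^+ 2 = 1 - a ^+ 2 by rewrite sqr_sqrtr // subr_ge0; nra.
have s2 : s ^+ 2 = 2 by rewrite sqr_sqrtr.
have w0 : 0 <= w by rewrite sqrtr_ge0.
have s0 : 0 < s by rewrite sqrtr_gt0.
have N0 : 0 <= h ^+ 2 * r ^+ 2 + 2 * b ^+ 2 * (r ^+ 2) ^+ 2.
  by have := sqr_ge0 (h * r); have := sqr_ge0 (b * r ^+ 2); move=> *; nra.
have L := @lagr R h b r a w s w2 s2.
have Z : (h * r * w - s * b * r ^+ 2 * a) ^+ 2 = 0.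
  by rewrite -L E sqr_sqrtr // subrr.
move/eqP: Z; rewrite sqrf_eq0 subr_eq0 => /eqP Z.
have hw : h * w = s * b * r * a.
  apply: (mulIf (lt0r_neq0 r0)); move: Z; rewrite expr2 => Z; lra.
have sbr : 0 < s * b * r by rewrite !mulr_gt0.
have a0 : 0 <= a by rewrite -(pmulr_rge0 _ sbr) -hw mulr_ge0 // ltW.
have [E2 [ah0 _]] := @ah_sq R h b r h0.
apply/eqP; apply: sq_inj => //; first exact: ltW.
rewrite E2.
have d0 : 0 < h ^+ 2 + 2 * b ^+ 2 * r ^+ 2.
  by have := exprn_gt0 2 h0; have := sqr_ge0 (b * r); move=> *; nra.
apply: (mulIf (lt0r_neq0 d0)); rewrite mulfVK ?lt0r_neq0 //.
have : (s * b * r * a) ^+ 2 = (h * w) ^+ 2 by rewrite hw.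
rewrite !exprMn s2 w2 => H; lra.
Qed.

Lemma XeqN (R : realType) (h b r : R) : 0 < h -> 0 <= b -> 0 <= r ->
  Xf h b (h / Num.sqrt (h ^+ 2 + 2 * b ^+ 2 * r ^+ 2)) r = Sf h b (r ^+ 2).
Proof.
move=> h0 b0 r0.
rewrite /Xf /Sf /f_lin.
have [E2 [ah0 ah1]] := @ah_sq R h b r h0.
set ah := h / _ in E2 ah0 ah1 *; clearbody ah.
set d := h ^+ 2 + 2 * b ^+ 2 * r ^+ 2 in E2.
have d0 : 0 < d.
  by rewrite /d; have := exprn_gt0 2 h0; have := sqr_ge0 (b * r); move=> *; nra.
set w := Num.sqrt (1 - ah ^+ 2); set s := Num.sqrt 2.
have w2 : w ^+ 2 = 1 - ah ^+ 2 by rewrite sqr_sqrtr // subr_ge0; nra.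
have s2 : s ^+ 2 = 2 by rewrite sqr_sqrtr.
have w0 : 0 <= w by rewrite sqrtr_ge0.
have s0 : 0 < s by rewrite sqrtr_gt0.
have N0 : 0 <= h ^+ 2 * r ^+ 2 + 2 * b ^+ 2 * (r ^+ 2) ^+ 2.
  by have := sqr_ge0 (h * r); have := sqr_ge0 (b * r ^+ 2); move=> *; nra.
have L := @lagr R h b r ah w s w2 s2.
have hw : h * w = s * b * r * ah.
  apply: sq_inj.
  - by rewrite mulr_ge0 // ltW.
  - by rewrite !mulr_ge0 // ltW.
  rewrite !exprMn w2 s2 E2 /d; field.
  by rewrite lt0r_neq0.
have X0 : 0 <= h * (r * ah) + s * b * r ^+ 2 * w.
  by rewrite addr_ge0 // !mulr_ge0 // ?ltW // exprn_ge0.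
have E3 : h * r * w - s * b * r ^+ 2 * ah = 0.
  rewrite (_ : h * r * w - s * b * r ^+ 2 * ah = r * (h * w - s * b * r * ah)); last by ring.
  by rewrite hw subrr mulr0.
move: L; rewrite E3 expr0n /= => /eqP; rewrite subr_eq0 => /eqP ->.
by rewrite sqrtr_sqr ger0_norm.
Qed.

Lemma Btilde_val (R : realType) (h b a r : R) : r ^+ 2 < 1 ->
  Btilde h b a r = (Xf h b a r + ln (1 - r ^+ 2) / 2 + b ^+ 2 / 2 * (1 - r ^+ 2) ^+ 2)%:E.
Proof. by move=> H; rewrite /Btilde /g_fun H /Xf -EFinD addrA. Qed.

Lemma Btilde_ninf (R : realType) (h b a r : R) : ~~ (r ^+ 2 < 1) -> Btilde h b a r = -oo%E.
Proof. by move=> H; rewrite /Btilde /g_fun (negbTE H) addeNy. Qed.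

Unset Implicit Arguments. Set Strict Implicit.

Theorem lemma5p3 (R : realType) (h beta : R) (hh : 0 < h) (hbeta : 0 < beta) :
  let LHS := [set Btilde h beta a r | r in Plef beta & a in `[-1, 1]] in
  let Q := `[qP beta, 1[%classic in
  ereal_sup LHS = ereal_sup [set (Bscr h beta q)%:E | q in Q]
  /\ (forall x y t, x \in Q -> y \in Q -> 0 <= t <= 1 ->
        t * Bscr h beta x + (1 - t) * Bscr h beta y
        <= Bscr h beta (t * x + (1 - t) * y))
  /\ exists qh : R,
       qh \in Q /\
           (forall q, q \in Q -> q != qh -> Bscr h beta q < Bscr h beta qh) /\
           qP beta < qh < 1 /\
           qh / (h ^+ 2 + 2 * qh * beta ^+ 2) = (1 - qh) ^+ 2 /\
           (forall q, qP beta < q < 1 ->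
              q / (h ^+ 2 + 2 * q * beta ^+ 2) = (1 - q) ^+ 2 -> q = qh) /\
           (let rh := Num.sqrt qh in
            let ah := h / Num.sqrt (h ^+ 2 + 2 * beta ^+ 2 * qh) in
            rh \in Plef beta /\ ah \in `[-1, 1] /\
                Btilde h beta ah rh = ereal_sup LHS /\
                forall r a, r \in Plef beta -> a \in `[-1, 1] ->
                  (r, a) != (rh, ah) ->
                  (Btilde h beta a r < Btilde h beta ah rh)%E).
Proof.
move=> LHS Q.
have [qP0 qP1 qPK qPc] := qP_facts hbeta.
have inQ : forall q, (q \in Q) = (qP beta <= q < 1).
  by move=> q; apply/idP/idP => [/set_mem|H]; [|apply: mem_set]; rewrite /Q /= in_itv.
have inP : forall r, (r \in Plef beta) = (Num.sqrt (qP beta) <= r <= 1).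
  by move=> r; apply/idP/idP => [/set_mem|H]; [|apply: mem_set]; rewrite /Plef /= in_itv.
have inI : forall a : R, (a \in `[-1, 1]) = (-1 <= a <= 1).
  by move=> a; rewrite in_itv.
have [qh [Pqh qh1 Eqh]] := root_ex hh hbeta.
have qh0 : 0 < qh := le_lt_trans qP0 Pqh.
have qhQ : qh \in Q by rewrite inQ (ltW Pqh) qh1.
have Bmx : forall q, q \in Q -> q != qh -> Bscr h beta q < Bscr h beta qh.
  move=> q; rewrite inQ => /andP[q1 q2] qn.
  exact: (Bmax hh hbeta Pqh qh1 Eqh q1 q2 qn).
pose rh := Num.sqrt qh.
have rh2 : rh ^+ 2 = qh by rewrite sqr_sqrtr // ltW.
have rh0 : 0 < rh by rewrite sqrtr_gt0.
pose ah := h / Num.sqrt (h ^+ 2 + 2 * beta ^+ 2 * qh).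
have ahE : ah = h / Num.sqrt (h ^+ 2 + 2 * beta ^+ 2 * rh ^+ 2) by rewrite rh2.
have [_ [ah0 ah1]] := @ah_sq R h beta rh hh.
rewrite -ahE in ah0 ah1.
have rhP : rh \in Plef beta.
  rewrite inP /rh (ler_sqrt _ (ltW qh0)) (ltW Pqh) /=.
  by rewrite -sqrtr1 ler_sqrt // ltW.
have ahI : ah \in `[-1, 1] by rewrite inI ah1 andbT; apply: le_trans (ltW ah0); lra.
have Bth : Btilde h beta ah rh = (Bscr h beta qh)%:E.
  rewrite Btilde_val ?rh2 // ahE XeqN // ?ltW //.
  by rewrite rh2.
have rP : forall r, r \in Plef beta -> 0 <= r /\ r <= 1 /\ (r ^+ 2 < 1 -> r ^+ 2 \in Q).
  move=> r; rewrite inP => /andP[r1 r2].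
  have sq0 : 0 <= Num.sqrt (qP beta) := sqrtr_ge0 _.
  have r0 : 0 <= r := le_trans sq0 r1.
  split => //; split => // H; rewrite inQ H andbT.
  have : Num.sqrt (qP beta) ^+ 2 <= r ^+ 2 by rewrite ler_pXn2r // nnegrE.
  by rewrite sqr_sqrtr.
have UBs : forall r a, r \in Plef beta -> a \in `[-1, 1] -> (r, a) != (rh, ah) ->
    (Btilde h beta a r < (Bscr h beta qh)%:E)%E.
  move=> r a Hr; rewrite inI => /andP[a1 a2] ne.
  have [r0 [r1 rQ]] := rP r Hr.
  have [H|H] := boolP (r ^+ 2 < 1); last by rewrite Btilde_ninf // ltNyr.
  rewrite Btilde_val // lte_fin.
  have XN := @XleN R h beta r a a1 a2.
  have [rE|rn] := eqVneq r rh.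
    have an : a != ah by move: ne; rewrite rE xpair_eqE eqxx.
    have XL : Xf h beta a rh < Sf h beta (rh ^+ 2).
      by apply: XltN => //; rewrite -ahE.
    by rewrite rE; move: XL; rewrite rh2 /Bscr -/(Sf h beta qh); lra.
  have qn : r ^+ 2 != qh.
    apply: contra rn => /eqP E; apply/eqP.
    by rewrite /rh -E sqrtr_sqr ger0_norm.
  have := Bmx _ (rQ H) qn.
  rewrite /Bscr -/(Sf h beta (r ^+ 2)); lra.
have UB : forall r a, r \in Plef beta -> a \in `[-1, 1] ->
    (Btilde h beta a r <= (Bscr h beta qh)%:E)%E.
  move=> r a Hr Ha; have [E|ne] := eqVneq (r, a) (rh, ah).
    by case: E => -> ->; rewrite Bth.
  exact/ltW/UBs.
have supL : ereal_sup LHS = (Bscr h beta qh)%:E.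
  apply/eqP; rewrite eq_le; apply/andP; split.
    apply: ge_ereal_sup => y [r Hr [a Ha <-]].

    by apply: UB; [exact: mem_set Hr | exact: Ha].
  apply: ereal_sup_ubound; exists rh; first exact/set_mem.
  by exists ah; first exact: ahI.
have supR : ereal_sup [set (Bscr h beta q)%:E | q in Q] = (Bscr h beta qh)%:E.
  apply/eqP; rewrite eq_le; apply/andP; split.
    apply: ge_ereal_sup => y [q Hq <-].
    rewrite lee_fin; have [->|qn] := eqVneq q qh; first exact: lexx.
    exact/ltW/Bmx/qn/mem_set.
  by apply: ereal_sup_ubound; exists qh; first exact/set_mem.
split; first by rewrite supL supR.
split.
  move=> x y t; rewrite !inQ => /andP[x1 x2] /andP[y1 y2] /andP[t0 t1].
  exact: Bconc.
exists qh; split => //; split => //; split; first by rewrite Pqh qh1.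
split => //; split.
  move=> q /andP[q1 q2] Eq; apply/eqP; apply/negP => /negP qn.
  have A := Bmax hh hbeta Pqh qh1 Eqh (ltW q1) q2 qn.
  have qn2 : qh != q by rewrite eq_sym.
  have B := Bmax hh hbeta q1 q2 Eq (ltW Pqh) qh1 qn2.
  by have := lt_trans A B; rewrite ltxx.
move=> rh' ah'; rewrite /rh' /ah' -/rh -/ah.
split => //; split => //; split; first by rewrite supL Bth.
by move=> r a Hr Ha ne; rewrite Bth; apply: UBs.
Qed.
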